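(* Let $n,m\in\mathbb{N}$ and suppose: (A1) $X_1,\ldots,X_n,Y_1,\ldots,Y_m$ are GTAI; $\Theta_1,\ldots,\Theta_n,\Delta_1,\ldots,\Delta_m$ are non-negative, non-degenerate at zero, arbitrarily dependent random variables with distributions whose supports are bounded from above, and $(\Theta_1,\ldots,\Theta_n,\Delta_1,\ldots,\Delta_m)$ is independent of $(X_1,\ldots,X_n,Y_1,\ldots,Y_m)$; (A2) $X_i$ has distribution $F_i\in\mathcal{D}\cap\mathcal{L}$ and $Y_j$ has distribution $G_j\in\mathcal{D}\cap\mathcal{L}$ for all $i,j$; for each $i\le n\wedge m$ the pair $(X_i,Y_i)$ is SAI with some constant $C_i>0$; and $X_i$, $Y_j$ are independent whenever $i\neq j$. Let $a:[0,\infty)\to(0,\infty)$ satisfy $a(x)\to\infty$ and $a(x)=o(x)$ as $x\to\infty$. Then for every $1\le i\neq k\le n$ and every $j=1,\ldots,m$, $$\mathbb{P}(\Theta_iX_i>x,\;\Delta_jY_j>y,\;\Theta_k|X_k|>a(x))=o\big(\mathbb{P}(\Theta_iX_i>x,\;\Delta_jY_j>y)\big),\qquad x\wedge y\to\infty.$$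
   Context: All distributions considered have infinite right endpoint: $\overline V(x)=1-V(x)>0$ for all $x$. A distribution $V$ belongs to $\mathcal{D}$ (dominated variation) if $\limsup_{x\to\infty}\overline V(tx)/\overline V(x)<\infty$ for some (equivalently all) $t\in(0,1)$; it belongs to $\mathcal{L}$ (long tail) if $\lim_{x\to\infty}\overline V(x-a)/\overline V(x)=1$ for all $a>0$. SAI (strong asymptotic independence): real random variables $X,Y$ with distributions $F,G$ are SAI with constant $C>0$ if, as $x\wedge y\to\infty$, $\mathbb{P}(X^->x,Y>y)=O(F(-x)\overline G(y))$, $\mathbb{P}(X>x,Y^->y)=O(\overline F(x)G(-y))$ and $\mathbb{P}(X>x,Y>y)\sim C\,\overline F(x)\overline G(y)$, where $z^-=\max\{-z,0\}$. GTAI: real random variables $X_1,\ldots,X_n,Y_1,\ldots,Y_m$ with supports unbounded above are GTAI if $\lim_{x_i\wedge x_k\wedge y_j\to\infty}\mathbb{P}(|X_i|>x_i\mid X_k>x_k,Y_j>y_j)=0$ for all $1\le i\neq k\le n$, $1\le j\le m$, and $\lim_{x_i\wedge y_j\wedge y_k\to\infty}\mathbb{P}(|Y_j|>y_j\mid X_i>x_i,Y_k>y_k)=0$ for all $1\le j\neq k\le m$, $1\le i\le n$. For bivariate positive functions, $f=o(g)$ as $x\wedge y\to\infty$ means $f(x,y)/g(x,y)\to0$ as $\min\{x,y\}\to\infty$. *)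

(* Defs.v *)
From HB Require Import structures.
From mathcomp Require Import all_boot all_order all_algebra.
From mathcomp Require Import all_classical all_reals all_analysis.
Set Implicit Arguments. Unset Strict Implicit. Unset Printing Implicit Defensive.
Import Order.TTheory GRing.Theory Num.Theory.
Import numFieldNormedType.Exports.
Local Open Scope classical_set_scope.
Local Open Scope ring_scope.

Section Defs.
Context {d : measure_display} {T : measurableType d} {R : realType}.
Variable P : probability T R.

Definition pr (A : set T) : R := fine (P A).

Definition tailf (X : T -> R) (x : R) : R := pr [set w | x < X w].
Definition cdf (X : T -> R) (x : R) : R := pr [set w | X w <= x].

Definition inf_right_endpoint (X : T -> R) := forall x, 0 < tailf X x.

(* class D (dominated variation): limsup_{x->oo} Vbar(tx)/Vbar(x) < oo
   for some t in (0,1), i.e. the ratio is eventually bounded. *)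
Definition in_D (X : T -> R) :=
  inf_right_endpoint X /\
  exists t : R, 0 < t < 1 /\ exists K : R, exists M : R,
    forall x, M <= x -> tailf X (t * x) / tailf X x <= K.

Definition in_L (X : T -> R) :=
  inf_right_endpoint X /\
  forall a : R, 0 < a ->
    (fun x => tailf X (x - a) / tailf X x) @ +oo --> (1 : R).

Definition negpart (z : R) : R := Num.max (- z) 0.

Definition SAI (X Y : T -> R) (C : R) :=
  0 < C /\
  (exists K M : R, forall x y, M <= x -> M <= y ->
     pr [set w | x < negpart (X w) /\ y < Y w] <= K * (cdf X (- x) * tailf Y y)) /\
  (exists K M : R, forall x y, M <= x -> M <= y ->
     pr [set w | x < X w /\ y < negpart (Y w)] <= K * (tailf X x * cdf Y (- y))) /\
  (forall eps : R, 0 < eps -> exists M : R, forall x y, M <= x -> M <= y ->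
     `| pr [set w | x < X w /\ y < Y w] / (C * tailf X x * tailf Y y) - 1 | <= eps).

(* GTAI for X_1..X_n, Y_1..Y_m  (conditional probability written as ratio) *)
Definition GTAI (n m : nat) (X : 'I_n -> T -> R) (Y : 'I_m -> T -> R) :=
  (forall i x, 0 < tailf (X i) x) /\ (forall j y, 0 < tailf (Y j) y) /\
  (forall (i k : 'I_n) (j : 'I_m), i != k ->
     forall eps : R, 0 < eps -> exists M : R, forall xi xk yj,
       M <= xi -> M <= xk -> M <= yj ->
       pr [set w | xi < `|X i w| /\ xk < X k w /\ yj < Y j w]
         / pr [set w | xk < X k w /\ yj < Y j w] <= eps) /\
  (forall (j l : 'I_m) (i : 'I_n), j != l ->
     forall eps : R, 0 < eps -> exists M : R, forall yj xi yl,
       M <= yj -> M <= xi -> M <= yl ->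
       pr [set w | yj < `|Y j w| /\ xi < X i w /\ yl < Y l w]
         / pr [set w | xi < X i w /\ yl < Y l w] <= eps).

Definition indep2 (X Y : T -> R) :=
  forall A B : set R, measurable A -> measurable B ->
    P [set w | A (X w) /\ B (Y w)] = (P [set w | A (X w)] * P [set w | B (Y w)])%E.

Definition indep_vec (n m : nat) (U : 'I_n -> T -> R) (V : 'I_m -> T -> R)
    (X : 'I_n -> T -> R) (Y : 'I_m -> T -> R) :=
  forall (A C : 'I_n -> set R) (B D : 'I_m -> set R),
    (forall i, measurable (A i)) -> (forall j, measurable (B j)) ->
    (forall i, measurable (C i)) -> (forall j, measurable (D j)) ->
    P [set w | (forall i, A i (U i w)) /\ (forall j, B j (V j w)) /\
               (forall i, C i (X i w)) /\ (forall j, D j (Y j w))] =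
    (P [set w | (forall i, A i (U i w)) /\ (forall j, B j (V j w))] *
     P [set w | (forall i, C i (X i w)) /\ (forall j, D j (Y j w))])%E.

Definition good_mult (Th : T -> R) :=
  measurable_fun setT Th /\
  (forall w, 0 <= Th w) /\
  P [set w | Th w = 0] <> 1%E /\
  exists b : R, P [set w | Th w <= b] = 1%E.

End Defs.

(* Main.v *)
Require Import Defs.
From HB Require Import structures.
From mathcomp Require Import all_boot all_order all_algebra.
From mathcomp Require Import all_classical all_reals all_analysis.
From mathcomp Require Import ring lra.
Import Order.TTheory GRing.Theory Num.Theory.
Import numFieldNormedType.Exports.
Local Open Scope classical_set_scope.
Local Open Scope ring_scope.

Section Gen.
Context (d : measure_display) (T : measurableType d) (R : realType).
Variable P : probability T R.

Lemma prE (A : set T) : measurable A -> P A = (pr P A)%:E.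
Proof. by move=> mA; rewrite /pr fineK // fin_num_measure. Qed.

Lemma pr_ge0 (A : set T) : 0 <= pr P A.
Proof. by rewrite /pr fine_ge0 // measure_ge0. Qed.

Lemma pr_le (A B : set T) : measurable A -> measurable B -> A `<=` B ->
  pr P A <= pr P B.
Proof.
move=> mA mB AB; rewrite -lee_fin -!prE //.
exact: (le_measure P (mem_set mA) (mem_set mB) AB).
Qed.

Lemma prU (A B : set T) : measurable A -> measurable B -> A `&` B = set0 ->
  pr P (A `|` B) = pr P A + pr P B.
Proof.
move=> mA mB AB.
have : P (A `|` B) = (P A + P B)%E by rewrite measureU.
by rewrite !prE //; [move=> [] | exact: measurableU].
Qed.

Lemma pr_le_null (A B N : set T) : measurable A -> measurable B -> measurable N ->
  P N = 0%E -> A `<=` B `|` N -> pr P A <= pr P B.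
Proof.
move=> mA mB mN N0 AB.
have : (P A <= P B + P N)%E.
  apply: le_trans (measureU2 _ mB mN).
  by apply: (le_measure P) => //; rewrite inE //; exact: measurableU.
by rewrite N0 adde0 !prE // lee_fin.
Qed.

Lemma mlt (f g : T -> R) : measurable_fun setT f -> measurable_fun setT g ->
  measurable [set w | f w < g w].
Proof.
move=> mf mg.
have E : [set w | f w < g w] = setT `&` (fun x => f x < g x) @^-1` [set true].
  by apply/seteqP; split => w /=; [move=> ->|move=> [_ ->]].
by rewrite E; exact: (@measurable_realfun.measurable_fun_ltr _ _ _ _ f g mf mg) measurableT [set true] I.
Qed.

Lemma mle (f g : T -> R) : measurable_fun setT f -> measurable_fun setT g ->
  measurable [set w | f w <= g w].
Proof.
move=> mf mg.
have E : [set w | f w <= g w] = setT `&` (fun x => f x <= g x) @^-1` [set true].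
  by apply/seteqP; split => w /=; [move=> ->|move=> [_ ->]].
by rewrite E; exact: (@measurable_realfun.measurable_fun_ler _ _ _ _ f g mf mg) measurableT [set true] I.
Qed.

Lemma mcst (c : R) : measurable_fun (setT : set T) (fun _ => c).
Proof. exact: measurable_cst. Qed.


Lemma mltc (c : R) (f : T -> R) : measurable_fun setT f -> measurable [set w | c < f w].
Proof. by move=> mf; apply: mlt => //; exact: mcst. Qed.
Lemma mlec (c : R) (f : T -> R) : measurable_fun setT f -> measurable [set w | f w <= c].
Proof. by move=> mf; apply: mle => //; exact: mcst. Qed.
End Gen.

Lemma divle (R : realType) (x b B : R) : 0 < x -> 0 < b -> b <= B -> x / B <= x / b.
Proof. move=> x0 b0 bB; rewrite ler_pM2l // lef_pV2 // posrE (lt_le_trans b0 bB) //. Qed.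
Lemma tdivle (R : realType) (t x a b : R) : 0 < x -> 0 < a -> 0 < b -> 0 < t -> t * b <= a -> t * (x / a) <= x / b.
Proof.
move=> x0 a0 b0 t0 h.
rewrite mulrCA ler_pM2l // ler_pdivrMr //.
by rewrite mulrC ler_pdivlMr.
Qed.

Lemma hb (R : realType) (th z b s : R) : 0 <= th -> th <= b -> 0 < b -> 0 <= z -> s < th * z -> s / b < z.
Proof.
move=> th0 thb b0 z0 h; rewrite ltr_pdivrMr //; apply: (lt_le_trans h).
by rewrite mulrC ler_wpM2l.
Qed.
Lemma hpos (R : realType) (th z x : R) : 0 <= th -> 0 < x -> x < th * z -> 0 < z.
Proof.
move=> th0 x0 h; rewrite ltNge; apply/negP => z0.
have : th * z <= 0 by rewrite mulr_ge0_le0.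
by move=> h2; have := lt_le_trans (lt_trans x0 h) h2; rewrite ltxx.
Qed.
Lemma hc (R : realType) (th z a x : R) : 0 < a -> a < th -> 0 < x -> x / a < z -> x < th * z.
Proof.
move=> a0 ath x0; rewrite ltr_pdivrMr // => h.
have z0 : 0 < z by rewrite -(pmulr_lgt0 _ a0); exact: lt_trans h.
by apply: (lt_trans h); rewrite mulrC ltr_pM2r.
Qed.

Arguments hb {R th z b s}.
Arguments hpos {R th z x}.
Arguments hc {R th z a x}.
Arguments divle {R x b B}.
Arguments tdivle {R t x a b}.
Arguments mltc {d T R c f}.
Arguments prE {d T R} P {A}.
Arguments pr_ge0 {d T R} P A.
Arguments pr_le {d T R} P {A B}.
Arguments prU {d T R} P {A B}.
Arguments pr_le_null {d T R} P {A B N}.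
Arguments mlec {d T R c f}.

Section Core.
Context (d : measure_display) (T : measurableType d) (R : realType).
Variable P : probability T R.
Variables (Ti Dj Tk Xi Yj Xk : T -> R).
Hypotheses (mTi : measurable_fun setT Ti) (mDj : measurable_fun setT Dj)
  (mTk : measurable_fun setT Tk) (mXi : measurable_fun setT Xi)
  (mYj : measurable_fun setT Yj) (mXk : measurable_fun setT Xk).
Hypotheses (Ti0 : forall w, 0 <= Ti w) (Dj0 : forall w, 0 <= Dj w)
  (Tk0 : forall w, 0 <= Tk w).
Variable B : R.
Hypothesis B0 : 0 < B.
Hypotheses (nTi : P [set w | B < Ti w] = 0%E) (nDj : P [set w | B < Dj w] = 0%E)
  (nTk : P [set w | B < Tk w] = 0%E).
Hypothesis indep : forall (I J A Bs C : set R), measurable I -> measurable J ->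
  measurable A -> measurable Bs -> measurable C ->
  pr P [set w | I (Ti w) /\ J (Dj w) /\ A (Xi w) /\ Bs (Yj w) /\ C (Xk w)] =
  pr P [set w | I (Ti w) /\ J (Dj w)] * pr P [set w | A (Xi w) /\ Bs (Yj w) /\ C (Xk w)].
Variables (e K t M0 M2 : R).
Hypotheses (e0 : 0 <= e) (K0 : 0 <= K) (t0 : 0 < t) (t1 : t < 1).
Hypothesis Hp : forall s u v, M0 <= s -> M0 <= u -> M0 <= v ->
  pr P [set w | u < Xi w /\ v < Yj w /\ s < `|Xk w|] <= e * pr P [set w | u < Xi w /\ v < Yj w].
Hypothesis Hq : forall U V, M2 <= U -> M2 <= V ->
  pr P [set w | t * U < Xi w /\ t * V < Yj w] <= K * pr P [set w | U < Xi w /\ V < Yj w].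
Variables (x y s : R).
Hypotheses (x0 : 0 < x) (y0 : 0 < y) (xM0 : M0 <= x / B) (xM2 : M2 <= x / B)
  (yM0 : M0 <= y / B) (yM2 : M2 <= y / B) (sM : M0 <= s / B).

Let N := [set w | x < Ti w * Xi w /\ y < Dj w * Yj w /\ s < Tk w * `|Xk w|].
Let D := [set w | x < Ti w * Xi w /\ y < Dj w * Yj w].
Let cell a b c e' := [set w | (a < Ti w /\ Ti w <= b) /\ (c < Dj w /\ Dj w <= e')].

Let mR (a b : R) : measurable [set z : R | a < z /\ z <= b].
Proof. by apply: measurableI; [apply: mltc|apply: mlec]. Qed.

Let mI a b (f : T -> R) : measurable_fun setT f -> measurable [set w | a < f w /\ f w <= b].
Proof. by move=> mf; apply: measurableI; [apply: mltc|apply: mlec]. Qed.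

Let mRc (a : R) : measurable [set z : R | a < z].
Proof. exact: (@mltc _ R R a id (@measurable_id _ R setT)). Qed.

Let mN : measurable N.
Proof.
apply: measurableI; first by apply: mltc; exact: measurable_realfun.measurable_funM.
apply: measurableI; first by apply: mltc; exact: measurable_realfun.measurable_funM.
apply: mltc; apply: measurable_realfun.measurable_funM => //.
exact: (measurableT_comp (@measurable_realfun.normr_measurable R setT) mXk).
Qed.

Let mD : measurable D.
Proof.
apply: measurableI; first by apply: mltc; exact: measurable_realfun.measurable_funM.
by apply: mltc; exact: measurable_realfun.measurable_funM.
Qed.

Let mcell a b c e' : measurable (cell a b c e').
Proof.
by apply: measurableI; apply: measurableI; (apply: mltc || apply: mlec).
Qed.

Lemma cellP a b c e' : 0 < a -> a <= b -> b <= B -> t * b <= a ->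
  0 < c -> c <= e' -> e' <= B -> t * e' <= c ->
  pr P (N `&` cell a b c e') <= e * K * pr P (D `&` cell a b c e').
Proof.
move=> a0 ab bB tba c0 ce eB tec.
have b0 : 0 < b := lt_le_trans a0 ab.
have ee0 : 0 < e' := lt_le_trans c0 ce.
have mnX : measurable_fun setT (fun w => `|Xk w|).
  exact: (measurableT_comp (@measurable_realfun.normr_measurable R setT) mXk).
have mnR : measurable [set z : R | s / B < `|z|].
  by apply: mltc; exact: measurable_realfun.normr_measurable.
set W1 := [set w | (a < Ti w /\ Ti w <= b) /\ (c < Dj w /\ Dj w <= e') /\
   x / b < Xi w /\ y / e' < Yj w /\ s / B < `|Xk w|].
have mW1 : measurable W1.
  apply: measurableI; first exact: mI.
  apply: measurableI; first exact: mI.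
  apply: measurableI; first exact: mltc.
  apply: measurableI; first exact: mltc.
  exact: mltc.
have h1 : pr P (N `&` cell a b c e') <= pr P W1.
  apply: (@pr_le_null _ _ _ P _ _ [set w | B < Tk w]) => //.
  - exact: measurableI.
  - exact: mltc.
  move=> w [[hx [hy hs]] [[ha hb'] [hc' he]]].
  have ta : 0 < Ti w := lt_trans a0 ha.
  have tc : 0 < Dj w := lt_trans c0 hc'.
  case: (leP (Tk w) B) => hk; [left|right] => //.
  split; first by split.
  split; first by split.
  split; first exact: (hb (Ti0 w) hb' b0 (ltW (hpos (Ti0 w) x0 hx)) hx).
  split; first exact: (hb (Dj0 w) he ee0 (ltW (hpos (Dj0 w) y0 hy)) hy).
  exact: (hb (Tk0 w) hk B0 (normr_ge0 _) hs).
have h2 : pr P W1 = pr P (cell a b c e') *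
    pr P [set w | x / b < Xi w /\ y / e' < Yj w /\ s / B < `|Xk w|].
  exact: (indep _ _ _ _ _ (mR a b) (mR c e') (mRc (x / b)) (mRc (y / e')) mnR).
have h3 : pr P [set w | x / b < Xi w /\ y / e' < Yj w /\ s / B < `|Xk w|]
    <= e * pr P [set w | x / b < Xi w /\ y / e' < Yj w].
  apply: Hp => //.
    exact: le_trans xM0 (divle x0 b0 bB).
  exact: le_trans yM0 (divle y0 ee0 eB).
have h4 : pr P [set w | x / b < Xi w /\ y / e' < Yj w] <=
    pr P [set w | t * (x / a) < Xi w /\ t * (y / c) < Yj w].
  apply: pr_le.
  - by apply: measurableI; apply: mltc.
  - by apply: measurableI; apply: mltc.
  move=> w [h h'] /=; split.
    exact: le_lt_trans (tdivle x0 a0 b0 t0 tba) h.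
  exact: le_lt_trans (tdivle y0 c0 ee0 t0 tec) h'.
have h5 : pr P [set w | t * (x / a) < Xi w /\ t * (y / c) < Yj w] <=
    K * pr P [set w | x / a < Xi w /\ y / c < Yj w].
  apply: Hq.
    exact: le_trans xM2 (le_trans (divle x0 b0 bB) (divle x0 a0 ab)).
  exact: le_trans yM2 (le_trans (divle y0 ee0 eB) (divle y0 c0 ce)).
set W2 := [set w | (a < Ti w /\ Ti w <= b) /\ (c < Dj w /\ Dj w <= e') /\
   x / a < Xi w /\ y / c < Yj w /\ [set: R] (Xk w)].
have h6 : pr P W2 = pr P (cell a b c e') *
    pr P [set w | x / a < Xi w /\ y / c < Yj w].
  have -> : [set w | x / a < Xi w /\ y / c < Yj w] =
      [set w | x / a < Xi w /\ y / c < Yj w /\ [set: R] (Xk w)].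
    by apply/seteqP; split => w /=; [move=> [? ?]|move=> [? []]].
  exact: (indep _ _ _ _ _ (mR a b) (mR c e') (mRc (x / a)) (mRc (y / c)) measurableT).
have h7 : pr P W2 <= pr P (D `&` cell a b c e').
  apply: pr_le.
  - apply: measurableI; first exact: mI.
    apply: measurableI; first exact: mI.
    apply: measurableI; first exact: mltc.
    apply: measurableI; first exact: mltc.
    exact: measurableT.
  - exact: measurableI.
  move=> w [[ha hb'] [[hc' he] [hx [hy _]]]].
  split; last by split; split.
  by split; [exact: (hc a0 ha x0 hx)|exact: (hc c0 hc' y0 hy)].
have pc0 := pr_ge0 P (cell a b c e').
apply: (le_trans h1); rewrite h2.
apply: le_trans (_ : pr P (cell a b c e') * (e * (K * pr P [set w | x / a < Xi w /\ y / c < Yj w])) <= _).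
  apply: ler_wpM2l => //; apply: (le_trans h3); apply: ler_wpM2l => //.
  exact: le_trans h4 h5.
set pc := pr P (cell a b c e').
set q2 := pr P [set w | x / a < Xi w /\ y / c < Yj w].
have -> : pc * (e * (K * q2)) = e * K * (pc * q2) by ring.
by rewrite -h6 ler_wpM2l // mulr_ge0.
Qed.

Let Phi S := pr P (N `&` S) <= e * K * pr P (D `&` S).

Let phiU S1 S2 : measurable S1 -> measurable S2 -> S1 `&` S2 = set0 ->
  Phi S1 -> Phi S2 -> Phi (S1 `|` S2).
Proof.
move=> m1 m2 dis h1 h2; rewrite /Phi !setIUr.
have disX (Z : set T) : (Z `&` S1) `&` (Z `&` S2) = set0.
  apply/seteqP; split => w //= [[_ a] [_ b]].
  by have : (S1 `&` S2) w by []; rewrite dis.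
rewrite !prU //; try exact: measurableI.
by rewrite mulrDr; apply: lerD.
Qed.

Let phi0 S : S = set0 -> Phi S.
Proof.
move=> ->; rewrite /Phi !setI0 /pr measure0 /= mulr0.
by [].
Qed.

Let csplit1 a m b c e' : a <= m -> m <= b ->
  cell a b c e' = cell a m c e' `|` cell m b c e' /\ cell a m c e' `&` cell m b c e' = set0.
Proof.
move=> am mb; split.
  apply/seteqP; split => w /=.
    move=> [[ha hb] hc]; case: (leP (Ti w) m) => hm; [left|right] => //.
  move=> [[[ha hb] hc]|[[ha hb] hc]]; split => //; split => //.
    exact: le_trans hb mb.
  exact: le_lt_trans am ha.
apply/seteqP; split => w //= [[[ha hb] _] [[ha' hb'] _]].
by have := le_lt_trans hb ha'; rewrite ltxx.
Qed.

Let csplit2 a b c m e' : c <= m -> m <= e' ->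
  cell a b c e' = cell a b c m `|` cell a b m e' /\ cell a b c m `&` cell a b m e' = set0.
Proof.
move=> am mb; split.
  apply/seteqP; split => w /=.
    move=> [hc [ha hb]]; case: (leP (Dj w) m) => hm; [left|right] => //.
  move=> [[hc [ha hb]]|[hc [ha hb]]]; split => //; split => //.
    exact: le_trans hb mb.
  exact: le_lt_trans am ha.
apply/seteqP; split => w //= [[_ [ha hb]] [_ [ha' hb']]].
by have := le_lt_trans hb ha'; rewrite ltxx.
Qed.

Let q (l : nat) := B * t ^+ l.

Let q_gt0 l : 0 < q l.
Proof. by rewrite /q mulr_gt0 // exprn_gt0. Qed.

Let qS l : q l.+1 = t * q l.
Proof. by rewrite /q exprS mulrCA. Qed.

Let qSle l : q l.+1 <= q l.
Proof. by rewrite qS; apply: ler_piMl; [exact: ltW (q_gt0 l)|exact: ltW t1]. Qed.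

Let q_leB l : q l <= B.
Proof. by rewrite /q; apply: ler_piMr; [exact: ltW B0|exact: exprn_ile1 (ltW t0) (ltW t1)]. Qed.

Let q0 : q 0 = B.
Proof. by rewrite /q expr0 mulr1. Qed.

Let q_homo l l' : (l <= l')%N -> q l' <= q l.
Proof.
elim: l' => [|l' IH]; first by rewrite leqn0 => /eqP ->.
rewrite leq_eqVlt => /orP [/eqP -> //|].
by rewrite ltnS => /IH; apply: le_trans.
Qed.

Let strip L m : Phi (cell (q L) B (q m.+1) (q m)).
Proof.
elim: L => [|L IH].
  apply: phi0; rewrite q0; apply/seteqP; split => w //= [[h1 h2] _].
  by have := lt_le_trans h1 h2; rewrite ltxx.
have [E1 E2] := csplit1 (q L.+1) (q L) B (q m.+1) (q m) (qSle L) (q_leB L).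
rewrite E1; apply: phiU => //.
apply: cellP => //; try exact: q_leB; try exact: qSle.
  by rewrite qS.
by rewrite qS.
Qed.

Let full L L' : Phi (cell (q L) B (q L') B).
Proof.
elim: L' => [|L' IH].
  apply: phi0; rewrite q0; apply/seteqP; split => w //= [_ [h1 h2]].
  by have := lt_le_trans h1 h2; rewrite ltxx.
have [E1 E2] := csplit2 (q L) B (q L'.+1) (q L') B (qSle L') (q_leB L').
by rewrite E1; apply: phiU => //; exact: strip.
Qed.

Lemma mainP : pr P N <= e * K * pr P D.
Proof.
pose F L := N `&` cell (q L) B (q L) B.
have mF L : measurable (F L) by exact: measurableI.
have HF L : (P (F L) <= (e * K * pr P D)%:E)%E.
  rewrite (prE P (mF L)) lee_fin; apply: le_trans (full L L) _.
  apply: ler_wpM2l; first exact: mulr_ge0.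
  by apply: pr_le; [exact: measurableI|exact: mD|exact: subIsetl].
have homo : {homo F : n m / (n <= m)%N >-> (n <= m)%O}.
  move=> n m nm; apply/subsetPset => w [hN [[h1 h2] [h3 h4]]].
  split => //; split; split => //.
    exact: le_lt_trans (q_homo _ _ nm) h1.
  exact: le_lt_trans (q_homo _ _ nm) h3.
have mU := bigcupT_measurable F mF.
have cvgF := @nondecreasing_cvg_mu _ _ _ P F mF mU homo.
have HU : (P (\bigcup_L F L) <= (e * K * pr P D)%:E)%E.
  rewrite -(cvg_lim _ cvgF) //; apply: lime_le.
    by apply/cvg_ex; eexists; exact: cvgF.
  exact: nearW.
rewrite (prE P mU) lee_fin in HU; apply: le_trans HU.
have mNull : measurable ([set w | B < Ti w] `|` [set w | B < Dj w]).
  by apply: measurableU; apply: mltc.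
apply: (@pr_le_null _ _ _ P _ _ ([set w | B < Ti w] `|` [set w | B < Dj w])) => //.
  apply/eqP; rewrite eq_le measure_ge0 andbT.
  apply: le_trans (measureU2 P (mltc mTi) (mltc mDj)) _.
  change (P [set w | (B < Ti w)%R] + P [set w | (B < Dj w)%R] <= 0)%E.
  by rewrite nTi nDj adde0.
move=> w hw; case: (leP (Ti w) B) => hi; last by right; left.
case: (leP (Dj w) B) => hj; last by right; right.
left.
have [hx [hy _]] := hw.
have ti : 0 < Ti w.
  rewrite lt_neqAle Ti0 andbT; apply/negP => /eqP h.
  by move: hx; rewrite -h mul0r => /(lt_trans x0); rewrite ltxx.
have dj : 0 < Dj w.
  rewrite lt_neqAle Dj0 andbT; apply/negP => /eqP h.
  by move: hy; rewrite -h mul0r => /(lt_trans y0); rewrite ltxx.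
set m0 := Num.min (Ti w) (Dj w).
have m00 : 0 < m0 by rewrite lt_min ti dj.
have [L hL] : exists L, t ^+ L < m0 / B.
  have := @cvg_expr R t; rewrite ger0_norm ?ltW // => /(_ t1).
  move/cvgrPdist_lt/(_ (m0 / B) (divr_gt0 m00 B0)) => [L _ HL]; exists L.
  have := HL L (leqnn L); rewrite sub0r normrN ger0_norm //.
  exact: exprn_ge0 (ltW t0).
have qL : q L < m0 by rewrite /q mulrC -ltr_pdivlMr.
exists L => //; split => //; split; split => //.
  by apply: lt_le_trans qL _; rewrite ge_min lexx.
by apply: lt_le_trans qL _; rewrite ge_min lexx orbT.
Qed.

End Core.


Lemma approx (R : realType) (q c : R) : 0 < c -> `|q / c - 1| <= 2^-1 ->
  q <= 3 / 2 * c /\ c / 2 <= q.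
Proof.
move=> c0; rewrite ler_norml => /andP[h1 h2].
have qE : q = (q / c) * c by rewrite divfK // gt_eqF.
set r := q / c in h1 h2 qE; rewrite qE; split.
  by rewrite ler_pM2r //; lra.
by rewrite mulrC ler_pM2r //; lra.
Qed.

Section Ratio.
Context (d : measure_display) (T : measurableType d) (R : realType).
Variable P : probability T R.

Lemma tail_le (X : T -> R) (a b : R) : measurable_fun setT X -> a <= b ->
  tailf P X b <= tailf P X a.
Proof.
move=> mX ab; apply: pr_le; [exact: mltc|exact: mltc|].
by move=> w /=; apply: le_lt_trans.
Qed.

Lemma Dbound (X : T -> R) : measurable_fun setT X -> in_D P X ->
  exists tX KX MX, 0 < tX < 1 /\ 0 <= KX /\ 0 <= MX /\
   forall t' u, tX <= t' -> MX <= u -> tailf P X (t' * u) <= KX * tailf P X u.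
Proof.
move=> mX [pos [tX [/andP[t0 t1] [KX [MX H]]]]].
exists tX, `|KX|, (Num.max MX 0); split; first by rewrite t0 t1.
split; first exact: normr_ge0.
split; first by rewrite le_max lexx orbT.
move=> t' u tt uM.
have u0 : 0 <= u by apply: le_trans uM; rewrite le_max lexx orbT.
have uM' : MX <= u by apply: le_trans uM; rewrite le_max lexx.
apply: le_trans (tail_le _ _ _ mX (ler_wpM2r u0 tt)) _.
have := H u uM'; rewrite ler_pdivrMr // => h.
apply: le_trans h _; apply: ler_wpM2r; first exact: pr_ge0.
exact: ler_norm.
Qed.

Lemma prM (A B S : set T) : measurable A -> measurable B -> measurable S ->
  P S = (P A * P B)%E -> pr P S = pr P A * pr P B.
Proof.
move=> mA mB mS; rewrite (prE P mA) (prE P mB) (prE P mS).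
by move=> [].
Qed.

Lemma qratio (X Y : T -> R) : measurable_fun setT X -> measurable_fun setT Y ->
  in_D P X -> in_D P Y -> ((exists C, SAI P X Y C) \/ indep2 P X Y) ->
  exists t K M2, 0 < t /\ t < 1 /\ 0 <= K /\ forall U V, M2 <= U -> M2 <= V ->
   pr P [set w | t * U < X w /\ t * V < Y w] <=
   K * pr P [set w | U < X w /\ V < Y w].
Proof.
move=> mX mY DX DY H.
have [tF [KF [MF [/andP[tF0 tF1] [KF0 [MF0 HF]]]]]] := Dbound _ mX DX.
have [tG [KG [MG [/andP[tG0 tG1] [KG0 [MG0 HG]]]]]] := Dbound _ mY DY.
set t := Num.max tF tG.
have t0 : 0 < t by rewrite lt_max tF0.
have t1 : t < 1 by rewrite gt_max tF1 tG1.
have tFt : tF <= t by rewrite le_max lexx.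
have tGt : tG <= t by rewrite le_max lexx orbT.
have mRc (c : R) : measurable [set z : R | c < z].
  exact: (@mltc _ R R c id (@measurable_id _ R setT)).
have mq (u v : R) : measurable [set w | u < X w /\ v < Y w].
  by apply: measurableI; apply: mltc.
case: H => [[C [C0 [_ [_ HS]]]]|HI].
- have h2 : (0:R) < 2^-1 by rewrite invr_gt0.
  have [MS HMS] := HS (2^-1) h2.
  have bnd u v : MS <= u -> MS <= v ->
    pr P [set w | u < X w /\ v < Y w] <= 3 / 2 * (C * tailf P X u * tailf P Y v) /\
    C * tailf P X u * tailf P Y v / 2 <= pr P [set w | u < X w /\ v < Y w].
    move=> uM vM; apply: approx; last exact: HMS.
    by rewrite !mulr_gt0 //; case: DX; case: DY.
  exists t, (3 * (KF * KG)), (Num.max (Num.max MF MG) (Num.max (MS / t) 0)).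
  split => //; split => //; split; first by rewrite !mulr_ge0.
  move=> U V; rewrite !ge_max => /andP[/andP[UF UG] /andP[US U0]] /andP[/andP[VF VG] /andP[VS V0]].
  have tUS : MS <= t * U by rewrite mulrC -ler_pdivrMr.
  have tVS : MS <= t * V by rewrite mulrC -ler_pdivrMr.
  have US' : MS <= U.
    apply: le_trans tUS _; rewrite ler_piMl //; exact: ltW.
  have VS' : MS <= V.
    apply: le_trans tVS _; rewrite ler_piMl //; exact: ltW.
  have [b1 _] := bnd _ _ tUS tVS.
  have [_ b2] := bnd _ _ US' VS'.
  apply: le_trans b1 _.
  have hF := HF t U tFt UF.
  have hG := HG t V tGt VG.
  have f0 := pr_ge0 P [set w | t * U < X w].
  have g0 := pr_ge0 P [set w | t * V < Y w].
  have F0 := pr_ge0 P [set w | U < X w].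
  have G0 := pr_ge0 P [set w | V < Y w].
  apply: le_trans (_ : 3 / 2 * (C * (KF * tailf P X U) * (KG * tailf P Y V)) <= _).
    rewrite ler_pM2l //.
    apply: ler_pM; [exact: mulr_ge0 (ltW C0) f0|exact: g0| |exact: hG].
    by rewrite ler_pM2l.
  apply: le_trans (_ : 3 * (KF * KG) * (C * tailf P X U * tailf P Y V / 2) <= _); last first.
    by apply: ler_wpM2l => //; rewrite !mulr_ge0.
  rewrite /tailf; set a1 := pr P _; set a2 := pr P _.
  by rewrite le_eqVlt; apply/orP; left; apply/eqP; field.
- have qE u v : pr P [set w | u < X w /\ v < Y w] = tailf P X u * tailf P Y v.
    apply: (prM _ _ _ (mltc mX) (mltc mY) (mq u v)).
    exact: (HI _ _ (mRc u) (mRc v)).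
  exists t, (KF * KG), (Num.max MF MG).
  split => //; split => //; split; first by rewrite mulr_ge0.
  move=> U V; rewrite !ge_max => /andP[UF UG] /andP[VF VG].
  rewrite !qE.
  have hF := HF t U tFt UF.
  have hG := HG t V tGt VG.
  rewrite mulrACA; apply: ler_pM => //; exact: pr_ge0.
Qed.

End Ratio.

Lemma nullB (d : measure_display) (T : measurableType d) (R : realType)
  (P : probability T R) (f : T -> R) (b B : R) : measurable_fun setT f ->
  P [set w | f w <= b] = 1%E -> b <= B -> P [set w | B < f w] = 0%E.
Proof.
move=> mf h bB.
have U : [set w | f w <= b] `|` [set w | b < f w] = setT.
  by apply/seteqP; split => w //= _; case: (leP (f w) b) => hw; [left|right].
have I : [set w | f w <= b] `&` [set w | b < f w] = set0.
  apply/seteqP; split => w //= [h1 h2].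
  by have := le_lt_trans h1 h2; rewrite ltxx.
have h1 : pr P [set w | b < f w] = 0.
  have := prU P (mlec mf) (mltc mf) I.
  rewrite U {1}/pr probability_setT {1}/pr h /= => E.
  lra.
have h2 : pr P [set w | B < f w] = 0.
  apply/eqP; rewrite eq_le pr_ge0 andbT -h1.
  apply: pr_le; [exact: mltc|exact: mltc|].
  by move=> w /=; apply: le_lt_trans.
by rewrite (prE P (mltc mf)) h2.
Qed.

Lemma all_if1 (R : realType) (n : nat) (i : 'I_n) (S : set R) (f : 'I_n -> R) :
  (forall l, (if l == i then S else setT) (f l)) <-> S (f i).
Proof.
split; first by move/(_ i); rewrite eqxx.
by move=> h l; case: eqP => [->|].
Qed.

Lemma all_if2 (R : realType) (n : nat) (i k : 'I_n) (S C : set R) (f : 'I_n -> R) :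
  i != k ->
  (forall l, (if l == i then S else if l == k then C else setT) (f l)) <-> S (f i) /\ C (f k).
Proof.
move=> ik; split.
  move=> h; split; first by have := h i; rewrite eqxx.
  by have := h k; rewrite eq_sym (negbTE ik) eqxx.
by move=> [h1 h2] l; case: eqP => [->|_] //; case: eqP => [->|].
Qed.

Lemma mpre (d : measure_display) (T : measurableType d) (R : realType)
  (f : T -> R) (S : set R) : measurable_fun setT f -> measurable S ->
  measurable [set w | S (f w)].
Proof. by move=> mf mS; have := mf measurableT S mS; rewrite setTI. Qed.

Arguments nullB {d T R P f b B}.
Arguments all_if1 {R n i S} f.
Arguments all_if2 {R n i k S C} f.
Arguments mpre {d T R f S}.

Theorem lemma2p2 (d : measure_display) (T : measurableType d) (R : realType)
  (P : probability T R) (n m : nat)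
  (X : 'I_n -> T -> R) (Y : 'I_m -> T -> R)
  (Theta : 'I_n -> T -> R) (Delta : 'I_m -> T -> R) (a : R -> R) :
  (forall i, measurable_fun setT (X i)) ->
  (forall j, measurable_fun setT (Y j)) ->
  (* A1 *)
  GTAI P X Y ->
  (forall i, good_mult P (Theta i)) ->
  (forall j, good_mult P (Delta j)) ->
  indep_vec P Theta Delta X Y ->
  (* A2 *)
  (forall i, in_D P (X i) /\ in_L P (X i)) ->
  (forall j, in_D P (Y j) /\ in_L P (Y j)) ->
  (forall (i : 'I_n) (j : 'I_m), val i = val j ->
     exists C : R, SAI P (X i) (Y j) C) ->
  (forall (i : 'I_n) (j : 'I_m), val i <> val j -> indep2 P (X i) (Y j)) ->
  (* the function a *)
  (forall x, 0 <= x -> 0 < a x) ->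
  a x @[x --> +oo] --> +oo ->
  (fun x => a x / x) @ +oo --> (0 : R) ->
  forall (i k : 'I_n) (j : 'I_m), i != k ->
  forall eps : R, 0 < eps -> exists M : R, forall x y, M <= x -> M <= y ->
    pr P [set w | x < Theta i w * X i w /\ y < Delta j w * Y j w /\
                  a x < Theta k w * `|X k w|]
    / pr P [set w | x < Theta i w * X i w /\ y < Delta j w * Y j w] <= eps.
Proof.
move=> mX mY gt gT gD ind hXD hYD hS hI apos ainf alim i k j ik eps eps0.
have [mTi [Ti0 [_ [bi hbi]]]] := gT i.
have [mDj [Dj0 [_ [bj hbj]]]] := gD j.
have [mTk [Tk0 [_ [bk hbk]]]] := gT k.
set B := Num.max 1 (Num.max bi (Num.max bj bk)).
have B0 : 0 < B by rewrite lt_max ltr01.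
have nTi' : P [set w | B < Theta i w] = 0%E.
  by apply: (nullB mTi hbi); rewrite !le_max lexx /= orbT.
have nDj' : P [set w | B < Delta j w] = 0%E.
  by apply: (nullB mDj hbj); rewrite !le_max lexx /= !orbT.
have nTk' : P [set w | B < Theta k w] = 0%E.
  by apply: (nullB mTk hbk); rewrite !le_max lexx /= !orbT.
clearbody B.
have indep : forall (I J A Bs C : set R), measurable I -> measurable J ->
    measurable A -> measurable Bs -> measurable C ->
    pr P [set w | I (Theta i w) /\ J (Delta j w) /\ A (X i w) /\ Bs (Y j w) /\ C (X k w)] =
    pr P [set w | I (Theta i w) /\ J (Delta j w)] *
    pr P [set w | A (X i w) /\ Bs (Y j w) /\ C (X k w)].
  move=> I J A Bs C mI mJ mA mBs mC.
  have mfA : forall l : 'I_n, measurable ((fun l => if l == i then I else setT) l).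
    by move=> l; case: ifP.
  have mfB : forall l : 'I_m, measurable ((fun l => if l == j then J else setT) l).
    by move=> l; case: ifP.
  have mfC : forall l : 'I_n,
      measurable ((fun l => if l == i then A else if l == k then C else setT) l).
    by move=> l; case: ifP => _ //; case: ifP.
  have mfD : forall l : 'I_m, measurable ((fun l => if l == j then Bs else setT) l).
    by move=> l; case: ifP.
  have := ind _ _ _ _ mfA mfB mfC mfD.
  have E1 : [set w | (forall l, (if l == i then I else setT) (Theta l w)) /\
                     (forall l, (if l == j then J else setT) (Delta l w))] =
            [set w | I (Theta i w) /\ J (Delta j w)].
    apply/funext => w; apply/propext.
    split => -[h1 h2]; split.
    - exact: (all_if1 (fun l => Theta l w)).1 h1.
    - exact: (all_if1 (fun l => Delta l w)).1 h2.
    - exact: (all_if1 (fun l => Theta l w)).2 h1.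
    - exact: (all_if1 (fun l => Delta l w)).2 h2.
  have E2 : [set w | (forall l, (if l == i then A else if l == k then C else setT) (X l w)) /\
                     (forall l, (if l == j then Bs else setT) (Y l w))] =
            [set w | A (X i w) /\ Bs (Y j w) /\ C (X k w)].
    apply/funext => w; apply/propext.
    split.
      move=> [/(all_if2 (fun l => X l w) ik) [h1 h2] /(all_if1 (fun l => Y l w)) h3].
      by [].
    move=> [h1 [h3 h2]]; split.
      by apply/(all_if2 (fun l => X l w) ik).
    exact: (all_if1 (fun l => Y l w)).2 h3.
  have E3 : [set w | (forall l, (if l == i then I else setT) (Theta l w)) /\
                     (forall l, (if l == j then J else setT) (Delta l w)) /\
                     (forall l, (if l == i then A else if l == k then C else setT) (X l w)) /\
                     (forall l, (if l == j then Bs else setT) (Y l w))] =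
            [set w | I (Theta i w) /\ J (Delta j w) /\ A (X i w) /\ Bs (Y j w) /\ C (X k w)].
    apply/funext => w; apply/propext.
    split.
      move=> [/(all_if1 (fun l => Theta l w)) h1 [/(all_if1 (fun l => Delta l w)) h2
        [/(all_if2 (fun l => X l w) ik) [h3 h5] /(all_if1 (fun l => Y l w)) h4]]].
      by [].
    move=> [h1 [h2 [h3 [h4 h5]]]]; split; first exact: (all_if1 (fun l => Theta l w)).2 h1.
    split; first exact: (all_if1 (fun l => Delta l w)).2 h2.
    split; first by apply/(all_if2 (fun l => X l w) ik).
    exact: (all_if1 (fun l => Y l w)).2 h4.
  rewrite E1 E2 E3; apply: prM.
  - by apply: measurableI; apply: mpre.
  - by apply: measurableI; [apply: mpre|apply: measurableI; apply: mpre].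
  - apply: measurableI; first exact: mpre.
    apply: measurableI; first exact: mpre.
    by apply: measurableI; [apply: mpre|apply: measurableI; apply: mpre].
have [_ [_ [G3 _]]] := gt.
have Hp : forall e, 0 < e -> exists M0, forall s u v, M0 <= s -> M0 <= u -> M0 <= v ->
    pr P [set w | u < X i w /\ v < Y j w /\ s < `|X k w|] <=
    e * pr P [set w | u < X i w /\ v < Y j w].
  move=> e e0; have ki : k != i by rewrite eq_sym.
  have [M0 HM0] := G3 k i j ki e e0.
  exists M0 => s u v sM uM vM.
  have := HM0 s u v sM uM vM.
  have mnX : measurable_fun setT (fun w => `|X k w|).
    exact: (measurableT_comp (@measurable_realfun.normr_measurable R setT) (mX k)).
  have E : [set w | s < `|X k w| /\ u < X i w /\ v < Y j w] =
           [set w | u < X i w /\ v < Y j w /\ s < `|X k w|].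
    by apply/seteqP; split => w /= [h1 [h2 h3]].
  rewrite E.
  have mD : measurable [set w | u < X i w /\ v < Y j w].
    by apply: measurableI; apply: mltc.
  have mN : measurable [set w | u < X i w /\ v < Y j w /\ s < `|X k w|].
    by apply: measurableI; [apply: mltc|apply: measurableI; apply: mltc].
  have sub : pr P [set w | u < X i w /\ v < Y j w /\ s < `|X k w|] <=
             pr P [set w | u < X i w /\ v < Y j w].
    by apply: pr_le => // w /= [h1 [h2 _]].
  have [D0|D0] := eqVneq (pr P [set w | u < X i w /\ v < Y j w]) 0.
    by move=> _; rewrite D0 mulr0; rewrite D0 in sub.
  have Dp : 0 < pr P [set w | u < X i w /\ v < Y j w].
    by rewrite lt_neqAle eq_sym D0 pr_ge0.
  by rewrite ler_pdivrMr // mulrC.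
have [t [K [M2 [t0 [t1 [K0 Hq]]]]]] : exists t K M2, 0 < t /\ t < 1 /\ 0 <= K /\
    forall U V, M2 <= U -> M2 <= V ->
    pr P [set w | t * U < X i w /\ t * V < Y j w] <=
    K * pr P [set w | U < X i w /\ V < Y j w].
  apply: qratio => //; [exact: (hXD i).1|exact: (hYD j).1|].
  case: (eqVneq (val i) (val j)) => h; [left; exact: hS|right; apply: hI].
  exact/eqP.
set e := eps / (K + 1).
have K1 : 0 < K + 1 by rewrite ltr_wpDl.
have e0 : 0 < e by rewrite divr_gt0.
have eK : e * K <= eps.
  rewrite /e mulrAC ler_pdivrMr // ler_pM2l //; lra.
have [M0 HM0] := Hp e e0.
have [Ma HMa] : exists Ma, forall x, Ma < x -> B * M0 < a x.
  have := (cvgryPgt _).1 ainf (B * M0).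
  by move=> [Ma [_ HMa]]; exists Ma.
exists (Num.max (Ma + 1) (Num.max (B * M0) (Num.max (B * M2) B))).
move=> x y; rewrite !ge_max => /andP[xa /andP[xM0 /andP[xM2 xB]]].
move=> /andP[_ /andP[yM0 /andP[yM2 yB]]].
have x0 : 0 < x := lt_le_trans B0 xB.
have y0 : 0 < y := lt_le_trans B0 yB.
have divB (z M : R) : B * M <= z -> M <= z / B.
  by move=> h; rewrite ler_pdivlMr // mulrC.
have sM : M0 <= a x / B.
  apply: divB; apply: ltW; apply: HMa.
  by apply: lt_le_trans xa; rewrite ltrDl.
have main := @mainP d T R P (Theta i) (Delta j) (Theta k) (X i) (Y j) (X k)
  mTi mDj mTk (mX i) (mY j) (mX k) Ti0 Dj0 Tk0 B B0 nTi' nDj' nTk'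
  indep e K t M0 M2 (ltW e0) K0 t0 t1 HM0 Hq x y (a x) x0 y0 (divB _ _ xM0) (divB _ _ xM2)
  (divB _ _ yM0) (divB _ _ yM2) sM.
set Nn := pr P _ in main *; set Dd := pr P _ in main *.
have [D0|D0] := eqVneq Dd 0; first by rewrite D0 invr0 mulr0 ltW.
have Dp : 0 < Dd by rewrite lt_neqAle eq_sym D0 pr_ge0.
rewrite ler_pdivrMr //; apply: le_trans main _.
by rewrite ler_pM2r.
Qed.
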